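(* Let $G$ be a triangle-free graph. There exists a positive integer $r_0$ such that $\rho_o(G\square K_r)=\alpha_2(G)$ for every integer $r\geq r_0$.
   Context: All graphs are finite and simple. An open packing of $G$ is a set $P\subseteq V(G)$ whose vertices have pairwise disjoint open neighborhoods; $\rho_o(G)$ is the maximum size of an open packing. A set $S\subseteq V(G)$ is $2$-independent if $G[S]$ has maximum degree less than $2$; $\alpha_2(G)$ is the maximum size of a $2$-independent set. $K_r$ is the complete graph on $r$ vertices and $\square$ denotes the Cartesian product: $(g,h)\sim(g',h')$ iff ($gg'\in E(G)$, $h=h'$) or ($g=g'$, $hh'\in E(H)$). *)

(* Defs.v *)
From mathcomp Require Import all_boot.
Set Implicit Arguments. Unset Strict Implicit. Unset Printing Implicit Defensive.

Definition simple_graph (V : finType) (e : rel V) : Prop :=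
  symmetric e /\ irreflexive e.

Definition triangle_free (V : finType) (e : rel V) : Prop :=
  forall x y z : V, ~~ [&& e x y, e y z & e x z].

Definition open_nbhd (V : finType) (e : rel V) (v : V) : {set V} :=
  [set w | e v w].

Definition open_packing (V : finType) (e : rel V) (P : {set V}) : bool :=
  [forall u in P, forall v in P,
     (u != v) ==> [disjoint open_nbhd e u & open_nbhd e v]].

Definition rho_o (V : finType) (e : rel V) : nat :=
  \max_(P : {set V} | open_packing e P) #|P|.

Definition two_independent (V : finType) (e : rel V) (S : {set V}) : bool :=
  [forall v in S, #|[set w in S | e v w]| < 2].

Definition alpha2 (V : finType) (e : rel V) : nat :=
  \max_(S : {set V} | two_independent e S) #|S|.

Definition cartK (V : finType) (e : rel V) (r : nat) : rel (V * 'I_r) :=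
  fun x y => (e x.1 y.1 && (x.2 == y.2)) || ((x.1 == y.1) && (x.2 != y.2)).

(* Main.v *)
Require Import Defs.
From mathcomp Require Import all_boot.
Set Implicit Arguments. Unset Strict Implicit. Unset Printing Implicit Defensive.

Lemma opP (T : finType) (E : rel T) (P : {set T}) x y z :
  open_packing E P -> x \in P -> y \in P -> x != y -> E x z -> E y z -> False.
Proof.
move=> /forallP/(_ x)/implyP H Hx Hy Hxy Exz Eyz.
move: (H Hx) => /forallP/(_ y)/implyP/(_ Hy)/implyP/(_ Hxy) D.
by move: (disjointFr D (x:=z)); rewrite !inE Exz Eyz => /(_ isT).
Qed.

Section S.
Variables (V : finType) (e : rel V).
Hypothesis esymm : symmetric e.
Hypothesis tf : triangle_free e.

Lemma upper r (P : {set V * 'I_r}) : 2 < r -> open_packing (@cartK V e r) P ->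
  #|P| <= alpha2 e.
Proof.
move=> r3 HP.
have inj : {in P &, injective (@fst V 'I_r)}.
  move=> [v i] [u j] Hx Hy /= Evu; subst u.
  case: (eqVneq i j) => [->//|Dij].
  have: ~~ ([set: 'I_r] \subset [set i; j]).
    apply/negP => /subset_leq_card; rewrite cardsT card_ord.
    by rewrite cards2 Dij => H; move: (leq_trans r3 H).
  case/subsetPn => k _; rewrite !inE negb_or => /andP [Dki Dkj].
  exfalso; apply: (opP (z := (v, k)) HP Hx Hy).
  - by rewrite xpair_eqE eqxx Dij.
  - by rewrite /cartK /= eqxx eq_sym Dki orbT.
  - by rewrite /cartK /= eqxx eq_sym Dkj orbT.
rewrite -(card_in_imset inj).
apply: leq_bigmax_cond.
apply/forallP => v; apply/implyP => /imsetP [[v' i] Hx /= ->{v}].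
rewrite leqNgt; apply/negP => /card_gt1P [u [w [Hu Hw Duw]]].
move: Hu Hw; rewrite !inE => /andP [/imsetP [[u' j] Hy /= Eu] evu].
move=> /andP [/imsetP [[w' k] Hz /= Ew] evw]; subst u w.
have same : forall u' j, (u', j) \in P -> e v' u' -> j = i.
  move=> a l Ha eva; apply/eqP; apply/negP => /negP Dli.
  apply: (opP (z := (a, i)) HP Hx Ha).
  - by rewrite xpair_eqE negb_and (eq_sym i) Dli orbT.
  - by rewrite /cartK /= eva eqxx.
  - by rewrite /cartK /= eqxx Dli orbT.
have Ej := same _ _ Hy evu; have Ek := same _ _ Hz evw; subst j k.
apply: (opP (z := (v', i)) HP Hy Hz).
- by rewrite xpair_eqE negb_and Duw.
- by rewrite /cartK /= esymm evu eqxx.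
- by rewrite /cartK /= esymm evw eqxx.
Qed.

Section Lower.
Variables (S : {set V}).
Hypothesis HS : two_independent e S.

Definition NS v := [set w in S | (w == v) || e v w].

Lemma NS_sub u v : u \in S -> v \in S -> e u v -> NS u \subset NS v.
Proof.
move=> Hu Hv euv; apply/subsetP => w; rewrite !inE => /andP [Hw /orP [/eqP->|euw]].
  by rewrite Hu esymm euv orbT.
rewrite Hw /=; case: (eqVneq w v) => //= Dwv.
move: HS => /forallP/(_ u)/implyP/(_ Hu); rewrite ltnNge => /negP; case.
by apply/card_gt1P; exists w, v; rewrite !inE Hw Hv euw euv Dwv.
Qed.

Lemma NS_eq u v : u \in S -> v \in S -> u != v -> (NS u == NS v) = e u v.
Proof.
move=> Hu Hv Duv; apply/idP/idP.
  move/eqP => E; have : u \in NS u by rewrite inE Hu eqxx.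
  by rewrite E inE (negbTE Duv) /= esymm => /andP [].
move=> euv; rewrite eqEsubset !NS_sub //; by rewrite esymm.
Qed.

Variable r : nat.
Hypothesis hr : #|{: {set V}}| <= r.

Definition L v : 'I_r := widen_ord hr (enum_rank (NS v)).

Lemma L_eq u v : u \in S -> v \in S -> u != v -> (L u == L v) = e u v.
Proof.
move=> Hu Hv Duv; rewrite -(NS_eq Hu Hv Duv).
apply/eqP/eqP => [E|E]; last by rewrite /L E.
by apply: enum_rank_inj; apply: val_inj; move: E => /(congr1 val).
Qed.

Definition PS := [set (v, L v) | v in S].

Lemma PS_card : #|PS| = #|S|.
Proof. by apply: card_imset => a b []. Qed.

Lemma PS_op : open_packing (@cartK V e r) PS.
Proof.
apply/forallP => x; apply/implyP => /imsetP [u Hu ->].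
apply/forallP => y; apply/implyP => /imsetP [v Hv ->].
apply/implyP => Dxy.
have Duv : u != v by apply: contraNneq Dxy => ->.
have LE := L_eq Hu Hv Duv.
rewrite -setI_eq0; apply/eqP/setP => [[w k]]; rewrite !inE /cartK /=.
apply/negP => /andP [H1 H2].
case/orP: H1 => [/andP [euw /eqP Lu] | /andP [/eqP Euw Lu]];
case/orP: H2 => [/andP [evw /eqP Lv] | /andP [/eqP Evw Lv]].
- by move: (tf u v w); rewrite -LE Lu Lv eqxx evw euw.
all: try first
  [ by move: (tf u v w); rewrite -LE Lu Lv eqxx evw euw
  | by subst w k; move: LE; rewrite euw => /eqP Luv; move: Lv; rewrite Luv eqxx
  | by subst w k; move: LE; rewrite esymm evw => /eqP Luv; move: Lu; rewrite Luv eqxx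
  | by move: Duv; rewrite Euw Evw eqxx ].
Qed.

Lemma lower_S : #|S| <= rho_o (@cartK V e r).
Proof. rewrite -PS_card; exact: leq_bigmax_cond PS_op. Qed.

End Lower.
End S.

Theorem mainTheorem7 (V : finType) (e : rel V) :
  simple_graph e -> triangle_free e ->
  exists r0 : nat, 0 < r0 /\
    forall r : nat, r0 <= r -> rho_o (@cartK V e r) = alpha2 e.
Proof.
move=> [esymm _] tf; exists (#|{: {set V}}| + 3); split; first by rewrite addn3.
move=> r hr; apply/eqP; rewrite eqn_leq; apply/andP; split.
  apply/bigmax_leqP => P HP; apply: (upper esymm) HP.
  by apply: leq_trans hr; rewrite addn3.
apply/bigmax_leqP => S HS; apply: (lower_S esymm tf HS).
by apply: leq_trans hr; apply: leq_addr.
Qed.
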